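(* The Lie algebras $\mathfrak h(1)$, $\mathfrak g_{4,1}$, $\mathfrak g_{5,2}$, $\mathfrak g_{6,4}$, $\mathfrak g_{6,5}$ are admissible.
   Context: Lie algebras are given by a basis and brackets; brackets of basis vectors not listed vanish. $\mathfrak h(1)=\{[X_1,X_2]=Y\}$, $\mathfrak g_{4,1}=\{[X_1,Z]=Y,[X_1,X_2]=Z\}$, $\mathfrak g_{5,2}=\{[X_1,X_2]=Y,[X_1,X_3]=Z\}$, $\mathfrak g_{6,4}=\{[X_1,X_2]=Y,[X_1,X_3]=Z,[X_3,X_4]=Y\}$, $\mathfrak g_{6,5}=\{[X_1,X_2]=Y,[X_1,X_3]=Z,[X_2,X_4]=Z,[X_3,X_4]=-Y\}$ (real Lie algebras). For a Lie algebra $\mathfrak l$: $\mathfrak l^1=\mathfrak l$, $\mathfrak l^{k+1}=[\mathfrak l,\mathfrak l^k]$, $\mathfrak z(\mathfrak l)$ the centre. An orthogonal $\mathfrak l$-module $(\rho,\mathfrak a)$ is a finite-dimensional real vector space with a nondegenerate symmetric bilinear form $\langle\cdot,\cdot\rangle_{\mathfrak a}$ and a representation by skew-adjoint maps. $C^p(\mathfrak l,\mathfrak a)$: alternating $p$-linear maps with Chevalley–Eilenberg differential $d$; $C^p(\mathfrak l)=C^p(\mathfrak l,\mathbb R)$. $\langle\alpha\wedge\beta\rangle\in C^{p+q}(\mathfrak l)$ is the wedge product followed by contraction with $\langle\cdot,\cdot\rangle_{\mathfrak a}$. $\mathcal Z^2_Q(\mathfrak l,\mathfrak a)=\{(\alpha,\gamma)\in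 C^2(\mathfrak l,\mathfrak a)\oplus C^3(\mathfrak l): d\alpha=0, d\gamma=\frac12\langle\alpha\wedge\alpha\rangle\}$; the group $C^1(\mathfrak l,\mathfrak a)\oplus C^2(\mathfrak l)$ with $(\tau_1,\sigma_1)*(\tau_2,\sigma_2)=(\tau_1+\tau_2,\sigma_1+\sigma_2+\frac12\langle\tau_1\wedge\tau_2\rangle)$ acts by $(\alpha,\gamma)(\tau,\sigma)=(\alpha+d\tau,\gamma+d\sigma+\langle(\alpha+\frac12d\tau)\wedge\tau\rangle)$; the orbit set is $\mathcal H^2_Q(\mathfrak l,\mathfrak a)$. Admissibility (for nilpotent $\mathfrak l$ and semisimple orthogonal $(\rho,\mathfrak a)$): let $\mathfrak l^{m+2}=0$, $\mathfrak l_{(0)}=\mathfrak z(\mathfrak l)\cap\ker\rho$, $\mathfrak l_{(k)}=\mathfrak z(\mathfrak l)\cap\mathfrak l^{k+1}$ for $k\ge1$; represent the class by $(\alpha,\gamma)$ with $\alpha(\mathfrak l,\mathfrak l)\subset\mathfrak a^{\mathfrak l}$. It is admissible iff for $0\le k\le m$: $(A_k)$ if $L_0\in\mathfrak l_{(k)}$ and there are $A_0\in\mathfrak a$, $Z_0\in(\mathfrak l^{k+1})^*$ with $\alpha(L,L_0)=0$ and $\gamma(L,L_0,\cdot)=-\langle A_0,\alpha(L,\cdot)\rangle_{\mathfrak a}+\langle Z_0,[L,\cdot]\rangle$ on $\mathfrak l^{k+1}$ for all $L\in\mathfrak l$, then $L_0=0$; $(B_k)$ $\alpha(\ker(\mathfrak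 l\otimes\mathfrak l^{k+1}\xrightarrow{[\cdot,\cdot]}\mathfrak l))\subset\mathfrak a$ is nondegenerate. $\mathfrak l$ is admissible if for some semisimple orthogonal module $\mathfrak a$ an admissible class in $\mathcal H^2_Q(\mathfrak l,\mathfrak a)$ exists. *)

(* Defs.v *)
From Stdlib Require Import Rdefinitions.
From HB Require Import structures.
From mathcomp Require Import all_boot all_order all_algebra.
From mathcomp Require Import Rstruct.

Set Implicit Arguments.
Unset Strict Implicit.
Unset Printing Implicit Defensive.

Import Order.TTheory GRing.Theory Num.Theory.
Local Open Scope ring_scope.

Definition vec (n : nat) := 'rV[R]_n.

(* A bracket list entry (a, b, k, s) means: [e_a, e_b] contains s * e_k.
   Brackets of basis vectors that are not listed vanish; the antisymmetric
   counterparts [e_b, e_a] are implied. *)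
Definition sconst (L : seq (nat * nat * nat * R)) (i j k : nat) : R :=
  \sum_(t <- L)
     ((((t.1.1.1 == i) && (t.1.1.2 == j) && (t.1.2 == k)) : bool)%:R * t.2
      - (((t.1.1.1 == j) && (t.1.1.2 == i) && (t.1.2 == k)) : bool)%:R * t.2).

Definition br (n : nat) (L : seq (nat * nat * nat * R)) (x y : vec n) : vec n :=
  \row_(k < n) \sum_(i < n) \sum_(j < n) x 0 i * y 0 j * sconst L i j k.

(* Lower central series, as row spaces: lcs L k is l^(k+1)
   (so lcs L 0 = l = l^1, lcs L (k+1) = [l, l^(k+1)]). *)
Fixpoint lcs (n : nat) (L : seq (nat * nat * nat * R)) (k : nat) : 'M[R]_n :=
  match k with
  | 0 => 1%:M
  | k'.+1 =>
      (\sum_(i < n) \sum_(j < n)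
         <<br L (delta_mx 0 i) (row j (lcs n L k'))>>)%MS
  end.
Arguments lcs {n} L k.

Definition in_centre n L (X : vec n) : Prop := forall Y : vec n, br L X Y = 0.

Definition form (p : nat) (S : 'M[R]_p) (A B : 'rV[R]_p) : R := (A *m S *m B^T) 0 0.

Definition act (n p : nat) (rho : vec n -> 'M[R]_p) (X : vec n) (A : 'rV[R]_p)
  : 'rV[R]_p := A *m rho X.

Definition orthogonal_module (n : nat) (L : seq (nat * nat * nat * R)) (p : nat)
    (S : 'M[R]_p) (rho : vec n -> 'M[R]_p) : Prop :=
  [/\
      S^T = S, S \in unitmx,
      (forall (c : R) (X Y : vec n), rho (c *: X + Y) = c *: rho X + rho Y),
      (forall (X Y : vec n) (A : 'rV[R]_p),
          act rho (br L X Y) A = act rho X (act rho Y A) - act rho Y (act rho X A))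
    &
      (forall (X : vec n) (A B : 'rV[R]_p),
          form S (act rho X A) B + form S A (act rho X B) = 0)].

Definition invariant_subspace (n p : nat) (rho : vec n -> 'M[R]_p) (U : 'M[R]_p) :=
  forall X : vec n, (U *m rho X <= U)%MS.

Definition semisimple_module (n p : nat) (rho : vec n -> 'M[R]_p) : Prop :=
  forall U : 'M[R]_p, invariant_subspace rho U ->
    exists V : 'M[R]_p, [/\ invariant_subspace rho V,
                            (U :&: V == (0 : 'M[R]_p))%MS & (U + V == 1%:M)%MS].

Definition invariant_vector (n p : nat) (rho : vec n -> 'M[R]_p) (A : 'rV[R]_p) :=
  forall X : vec n, act rho X A = 0.

Definition cochain2 (n p : nat) (alpha : vec n -> vec n -> 'rV[R]_p) : Prop :=
  [/\ (forall (c : R) X X' Y, alpha (c *: X + X') Y = c *: alpha X Y + alpha X' Y),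
      (forall (c : R) X Y Y', alpha X (c *: Y + Y') = c *: alpha X Y + alpha X Y')
    & (forall X, alpha X X = 0)].

Definition cochain3 (n : nat) (gamma : vec n -> vec n -> vec n -> R) : Prop :=
  [/\ (forall (c : R) X X' Y Z,
          gamma (c *: X + X') Y Z = c * gamma X Y Z + gamma X' Y Z),
      (forall (c : R) X Y Y' Z,
          gamma X (c *: Y + Y') Z = c * gamma X Y Z + gamma X Y' Z),
      (forall (c : R) X Y Z Z',
          gamma X Y (c *: Z + Z') = c * gamma X Y Z + gamma X Y Z')
    & (forall X Y, [/\ gamma X X Y = 0, gamma X Y X = 0 & gamma Y X X = 0])].

Definition d2 (n : nat) (L : seq (nat * nat * nat * R)) (p : nat)
    (rho : vec n -> 'M[R]_p) (alpha : vec n -> vec n -> 'rV[R]_p)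
    (X0 X1 X2 : vec n) : 'rV[R]_p :=
  act rho X0 (alpha X1 X2) - act rho X1 (alpha X0 X2) + act rho X2 (alpha X0 X1)
  - alpha (br L X0 X1) X2 + alpha (br L X0 X2) X1 - alpha (br L X1 X2) X0.

Definition d3 (n : nat) (L : seq (nat * nat * nat * R))
    (gamma : vec n -> vec n -> vec n -> R) (X0 X1 X2 X3 : vec n) : R :=
  - gamma (br L X0 X1) X2 X3 + gamma (br L X0 X2) X1 X3 - gamma (br L X0 X3) X1 X2
  - gamma (br L X1 X2) X0 X3 + gamma (br L X1 X3) X0 X2 - gamma (br L X2 X3) X0 X1.

(* <alpha /\ beta> in C^4(l) for alpha, beta in C^2(l, a)
   (wedge product with the usual shuffle normalisation, then contraction) *)
Definition wedge22 (n p : nat) (S : 'M[R]_p) (alpha beta : vec n -> vec n -> 'rV[R]_p)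
    (X1 X2 X3 X4 : vec n) : R :=
    form S (alpha X1 X2) (beta X3 X4) - form S (alpha X1 X3) (beta X2 X4)
  + form S (alpha X1 X4) (beta X2 X3) + form S (alpha X2 X3) (beta X1 X4)
  - form S (alpha X2 X4) (beta X1 X3) + form S (alpha X3 X4) (beta X1 X2).

Definition quadratic_cocycle (n : nat) (L : seq (nat * nat * nat * R)) (p : nat)
    (S : 'M[R]_p) (rho : vec n -> 'M[R]_p)
    (alpha : vec n -> vec n -> 'rV[R]_p) (gamma : vec n -> vec n -> vec n -> R) : Prop :=
  [/\ cochain2 alpha, cochain3 gamma,
      (forall X0 X1 X2, d2 L rho alpha X0 X1 X2 = 0)
    & (forall X0 X1 X2 X3,
         d3 L gamma X0 X1 X2 X3 = 2^-1 * wedge22 S alpha alpha X0 X1 X2 X3)].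

Definition l_sub (n : nat) (L : seq (nat * nat * nat * R)) (p : nat)
    (rho : vec n -> 'M[R]_p) (k : nat) (X : vec n) : Prop :=
  in_centre L X /\ (if k == 0%N then rho X = 0 else (X <= lcs L k)%MS).

Definition cond_A (n : nat) (L : seq (nat * nat * nat * R)) (p : nat)
    (S : 'M[R]_p) (rho : vec n -> 'M[R]_p)
    (alpha : vec n -> vec n -> 'rV[R]_p) (gamma : vec n -> vec n -> vec n -> R)
    (k : nat) : Prop :=
  forall L0 : vec n, l_sub L rho k L0 ->
  forall (A0 : 'rV[R]_p) (Z0 : vec n -> R),
    (forall (c : R) (Y Y' : vec n), (Y <= lcs L k)%MS -> (Y' <= lcs L k)%MS ->
        Z0 (c *: Y + Y') = c * Z0 Y + Z0 Y') ->
    (forall Lx : vec n, alpha Lx L0 = 0) ->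
    (forall Lx Y : vec n, (Y <= lcs L k)%MS ->
        gamma Lx L0 Y = - form S A0 (alpha Lx Y) + Z0 (br L Lx Y)) ->
    L0 = 0.

(* Tensors in l (x) l are represented by n x n matrices T (T = sum_ij T_ij e_i (x) e_j);
   l (x) l^(k+1) is the set of T all of whose rows lie in l^(k+1). *)
Definition tensor_bracket (n : nat) (L : seq (nat * nat * nat * R)) (T : 'M[R]_n) : vec n :=
  \sum_(i < n) \sum_(j < n) T i j *: br L (delta_mx 0 i) (delta_mx 0 j).

Definition tensor_alpha (n p : nat) (alpha : vec n -> vec n -> 'rV[R]_p) (T : 'M[R]_n)
  : 'rV[R]_p :=
  \sum_(i < n) \sum_(j < n) T i j *: alpha (delta_mx 0 i) (delta_mx 0 j).

Definition image_B (n : nat) (L : seq (nat * nat * nat * R)) (p : nat)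
    (alpha : vec n -> vec n -> 'rV[R]_p) (k : nat) (A : 'rV[R]_p) : Prop :=
  exists T : 'M[R]_n,
    [/\ (T <= lcs L k)%MS, tensor_bracket L T = 0 & A = tensor_alpha alpha T].

Definition cond_B (n : nat) (L : seq (nat * nat * nat * R)) (p : nat)
    (S : 'M[R]_p) (alpha : vec n -> vec n -> 'rV[R]_p) (k : nat) : Prop :=
  forall A : 'rV[R]_p, image_B L alpha k A ->
    (forall B : 'rV[R]_p, image_B L alpha k B -> form S A B = 0) -> A = 0.

(* The class of (alpha, gamma) (a representative with alpha(l,l) in a^l)
   is admissible; l^(m+2) = 0 is lcs L (m+1) = 0. *)
Definition admissible_cocycle (n : nat) (L : seq (nat * nat * nat * R)) (p : nat)
    (S : 'M[R]_p) (rho : vec n -> 'M[R]_p)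
    (alpha : vec n -> vec n -> 'rV[R]_p) (gamma : vec n -> vec n -> vec n -> R) : Prop :=
  exists m : nat, lcs (n := n) L m.+1 = 0 /\
    forall k : nat, (k <= m)%N -> cond_A L S rho alpha gamma k /\ cond_B L S alpha k.

Definition admissible (n : nat) (L : seq (nat * nat * nat * R)) : Prop :=
  exists (p : nat) (S : 'M[R]_p) (rho : vec n -> 'M[R]_p)
         (alpha : vec n -> vec n -> 'rV[R]_p) (gamma : vec n -> vec n -> vec n -> R),
    [/\ orthogonal_module L S rho, semisimple_module rho,
        quadratic_cocycle L S rho alpha gamma,
        (forall X Y : vec n, invariant_vector rho (alpha X Y))
      & admissible_cocycle L S rho alpha gamma].

(* h(1): X1=e0, X2=e1, Y=e2 ; [X1,X2]=Y *)
Definition h1_dim : nat := 3.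
Definition h1_br : seq (nat * nat * nat * R) := [:: (0%N, 1%N, 2%N, 1)].

(* g_{4,1}: X1=e0, X2=e1, Z=e2, Y=e3 ; [X1,Z]=Y, [X1,X2]=Z *)
Definition g41_dim : nat := 4.
Definition g41_br : seq (nat * nat * nat * R) := [:: (0%N, 2%N, 3%N, 1); (0%N, 1%N, 2%N, 1)].

(* g_{5,2}: X1=e0, X2=e1, X3=e2, Y=e3, Z=e4 ; [X1,X2]=Y, [X1,X3]=Z *)
Definition g52_dim : nat := 5.
Definition g52_br : seq (nat * nat * nat * R) := [:: (0%N, 1%N, 3%N, 1); (0%N, 2%N, 4%N, 1)].

(* g_{6,4}: X1..X4=e0..e3, Y=e4, Z=e5 ; [X1,X2]=Y, [X1,X3]=Z, [X3,X4]=Y *)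
Definition g64_dim : nat := 6.
Definition g64_br : seq (nat * nat * nat * R) :=
  [:: (0%N, 1%N, 4%N, 1); (0%N, 2%N, 5%N, 1); (2%N, 3%N, 4%N, 1)].

(* g_{6,5}: X1..X4=e0..e3, Y=e4, Z=e5 ;
   [X1,X2]=Y, [X1,X3]=Z, [X2,X4]=Z, [X3,X4]=-Y *)
Definition g65_dim : nat := 6.
Definition g65_br : seq (nat * nat * nat * R) :=
  [:: (0%N, 1%N, 4%N, 1); (0%N, 2%N, 5%N, 1); (1%N, 3%N, 5%N, 1); (2%N, 3%N, 4%N, -1)].

(* Main.v *)
Require Import Defs.
From Stdlib Require Import Rdefinitions.
From HB Require Import structures.
From mathcomp Require Import all_boot all_order all_algebra.
From mathcomp Require Import Rstruct.
From mathcomp Require Import ring lra.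
Import Defs.

Set Implicit Arguments.
Unset Strict Implicit.
Unset Printing Implicit Defensive.
Import Order.TTheory GRing.Theory Num.Theory.
Local Open Scope ring_scope.

Definition c {n} (x : 'rV[R]_n.+1) (i : nat) : R := x 0 (inord i).
Arguments c : simpl never.

Definition alph (n p : nat) (P : seq (nat * nat * nat * R)) (X Y : 'rV[R]_n.+1) : 'rV[R]_p :=
  \row_(r < p) \sum_(t <- P)
     ((t.1.2 == r)%:R * t.2 * (c X t.1.1.1 * c Y t.1.1.2 - c X t.1.1.2 * c Y t.1.1.1)).

Lemma c_alph n p P (X Y : 'rV[R]_n.+1) i : (i < p.+1)%N ->
  c (@alph n p.+1 P X Y) i = \sum_(t <- P)
     ((t.1.2 == i)%:R * t.2 * (c X t.1.1.1 * c Y t.1.1.2 - c X t.1.1.2 * c Y t.1.1.1)).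
Proof. by move=> h; rewrite /c mxE inordK. Qed.

Lemma c_lin n (a : R) (X Y : 'rV[R]_n.+1) i : c (a *: X + Y) i = a * c X i + c Y i.
Proof. by rewrite /c !mxE. Qed.

Lemma c0 n i : c (0 : 'rV[R]_n.+1) i = 0.
Proof. by rewrite /c mxE. Qed.

Lemma c_delta n i j : (i < n.+1)%N -> (j < n.+1)%N ->
  c (delta_mx 0 (inord j) : 'rV[R]_n.+1) i = (i == j)%:R.
Proof.
move=> hi hj; rewrite /c mxE /= -(inj_eq val_inj) /= !inordK //.
Qed.

Lemma c_diag n (v : 'rV[R]_n.+1) (f : nat -> R) i : (i < n.+1)%N ->
  c (v *m diag_mx (\row_(k < n.+1) f k)) i = c v i * f i.
Proof. by move=> h; rewrite /c mul_mx_diag !mxE inordK. Qed.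

Lemma rowc n (x y : 'rV[R]_n.+1) : (forall i, (i < n.+1)%N -> c x i = c y i) -> x = y.
Proof.
move=> h; apply/rowP => i; have := h i (ltn_ord i); by rewrite /c inord_val.
Qed.

Lemma neq_ord n (b : nat) (j : 'I_n.+1) : (b < n.+1)%N -> j != inord b -> (b == j) = false.
Proof.
move=> hb hj; apply/negbTE; apply: contra hj => /eqP ->; by rewrite inord_val.
Qed.

Lemma sum2_delta n (x y : 'rV[R]_n.+1) a b : (a < n.+1)%N -> (b < n.+1)%N ->
  \sum_(i < n.+1) \sum_(j < n.+1) x 0 i * y 0 j * (((a == i) && (b == j))%:R) = c x a * c y b.
Proof.
move=> ha hb; rewrite (bigD1 (inord a)) //=.
rewrite [X in _ + X = _]big1 ?addr0; last first.
  move=> i hi; rewrite neq_ord //; apply: big1 => j _; by rewrite mulr0.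
rewrite (bigD1 (inord b)) //=.
rewrite [X in _ + X = _]big1 ?addr0; last first.
  move=> j hj; rewrite (neq_ord hb hj) andbF; by rewrite mulr0.
by rewrite !inordK // !eqxx mulr1.
Qed.

Lemma boolRM (b1 b2 : bool) : ((b1 && b2)%:R : R) = b1%:R * b2%:R.
Proof. by case: b1; case: b2; rewrite /= ?mulr1 ?mulr0 ?mul0r. Qed.

Lemma br_alph n L (X Y : 'rV[R]_n.+1) :
  all (fun t => (t.1.1.1 < n.+1)%N && (t.1.1.2 < n.+1)%N) L ->
  br L X Y = @alph n n.+1 L X Y.
Proof.
move=> hL; apply/rowP => k; rewrite !mxE.
elim: L hL => [|t L IH] /=.
  move=> _; rewrite big_nil; apply: big1 => i _; apply: big1 => j _.
  by rewrite /sconst big_nil mulr0.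
case/andP => /andP [ha hb] hL; rewrite big_cons -(IH hL).
case: t ha hb => [[[a b] cc] s] /= ha hb.
pose T (i j : 'I_n.+1) : R := ((a == i) && (b == j) && (cc == k))%:R * s - ((a == j) && (b == i) && (cc == k))%:R * s.
transitivity (\sum_(i < n.+1) \sum_(j < n.+1) X 0 i * Y 0 j * T i j +
   \sum_(i < n.+1) \sum_(j < n.+1) X 0 i * Y 0 j * sconst L i j k).
  rewrite -big_split; apply: eq_bigr => i _; rewrite -big_split; apply: eq_bigr => j _.
  by rewrite /sconst big_cons mulrDr.
congr (_ + _).
transitivity ((cc == k)%:R * s * (\sum_(i < n.+1) \sum_(j < n.+1) X 0 i * Y 0 j * (((a == i) && (b == j))%:R)
  - \sum_(i < n.+1) \sum_(j < n.+1) X 0 i * Y 0 j * (((b == i) && (a == j))%:R))).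
  rewrite -sumrB mulr_sumr; apply: eq_bigr => i _; rewrite -sumrB mulr_sumr; apply: eq_bigr => j _.
  rewrite /T !boolRM; ring.
by rewrite !sum2_delta.
Qed.

Lemma sum_ordn n (F : 'I_n.+1 -> R) :
  \sum_(i < n.+1) F i = \sum_(i <- iota 0 n.+1) F (inord i).
Proof.
have -> : \sum_(i <- iota 0 n.+1) F (inord i) = \sum_(0 <= i < n.+1) F (inord i)
  by rewrite /index_iota subn0.
by rewrite big_mkord; apply: eq_bigr => i _; rewrite inord_val.
Qed.

Lemma form_c p (S : 'M[R]_p.+1) A B :
  form S A B = \sum_(i <- iota 0 p.+1) \sum_(j <- iota 0 p.+1) c A i * S (inord i) (inord j) * c B j.
Proof.
rewrite /form [in LHS]mxE sum_ordn. 
have -> : \sum_(j <- iota 0 p.+1) (A *m S) 0 (inord j) * B^T (inord j) 0 =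
  \sum_(j <- iota 0 p.+1) \sum_(i <- iota 0 p.+1) c A i * S (inord i) (inord j) * c B j.
  apply: eq_bigr => j _; rewrite [(A *m S) _ _]mxE sum_ordn mulr_suml [B^T _ _]mxE.
  by apply: eq_bigr => i _.
by rewrite exchange_big.
Qed.

Lemma alph_cochain2 n p P : cochain2 (@alph n p P).
Proof.
split.
- move=> a X X' Y; apply/rowP => r; rewrite !mxE mulr_sumr -big_split /=.
  apply: eq_bigr => t _; rewrite !c_lin; ring.
- move=> a X Y Y'; apply/rowP => r; rewrite !mxE mulr_sumr -big_split /=.
  apply: eq_bigr => t _; rewrite !c_lin; ring.
- move=> X; apply/rowP => r; rewrite !mxE; apply: big1 => t _; ring.
Qed.

Definition rho0 n p : vec n -> 'M[R]_p := fun _ => 0.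

Lemma orth0 n L p (S : 'M[R]_p) : S^T = S -> S \in unitmx -> orthogonal_module L S (@rho0 n p).
Proof.
move=> h1 h2; split => //.
- by move=> a X Y; rewrite /rho0 scaler0 addr0.
- by move=> X Y A; rewrite /act /rho0 !mulmx0 subrr.
- by move=> X A B; rewrite /form /act /rho0 !mulmx0 trmx0 !mul0mx mulmx0 mxE addr0.
Qed.

Lemma ss0 n p : semisimple_module (@rho0 n p).
Proof.
move=> U _; exists (U^C)%MS; split.
- by move=> X; rewrite /rho0 mulmx0 sub0mx.
- by rewrite capmx_compl !submx_refl.
- apply/andP; split; first exact: submx1.
  rewrite sub1mx; exact: addsmx_compl_full.
Qed.

Lemma inv0 n p (a : 'rV[R]_p) : invariant_vector (@rho0 n p) a.
Proof. by move=> X; rewrite /act /rho0 mulmx0. Qed.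

Lemma cochain3_0 n : cochain3 (fun _ _ _ : vec n => (0:R)).
Proof. split => *; rewrite ?mulr0 ?addr0 //. Qed.

Lemma condA_of n L p (S : 'M[R]_p) rho (alpha : vec n -> vec n -> 'rV[R]_p) gamma k :
  (forall L0, in_centre L L0 -> (forall Lx, alpha Lx L0 = 0) -> L0 = 0) ->
  cond_A L S rho alpha gamma k.
Proof. by move=> h L0 [hc _] A0 Z0 _ ha _; apply: h. Qed.

Lemma condB_id n L p (alpha : vec n -> vec n -> 'rV[R]_p) k :
  cond_B L 1%:M alpha k.
Proof.
move=> A hA h; have := h A hA; rewrite /form mulmx1 mxE => hs.
apply/rowP => i; rewrite mxE.
have hp : forall j, xpredT j -> 0 <= A 0 j * A^T j 0.
  by move=> j _; rewrite mxE -expr2 sqr_ge0.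
have := @psumr_eq0P _ _ xpredT (fun j => A 0 j * A^T j 0) hp hs i isT.
rewrite mxE => /eqP; rewrite mulf_eq0 orbb; move/eqP; done.
Qed.

Lemma tb_delta n L (a b : 'I_n) : tensor_bracket L (delta_mx a b) = br L (delta_mx 0 a) (delta_mx 0 b).
Proof.
rewrite /tensor_bracket (bigD1 a) //= (bigD1 b) //= !mxE !eqxx scale1r.
rewrite [X in _ + X + _]big1 ?addr0; last by move=> j /negbTE hj; rewrite mxE hj andbF scale0r.
rewrite big1 ?addr0 // => i /negbTE hi; apply: big1 => j _; by rewrite mxE hi scale0r.
Qed.

Lemma ta_delta n p (alpha : vec n -> vec n -> 'rV[R]_p) (a b : 'I_n) :
  tensor_alpha alpha (delta_mx a b) = alpha (delta_mx 0 a) (delta_mx 0 b).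
Proof.
rewrite /tensor_alpha (bigD1 a) //= (bigD1 b) //= !mxE !eqxx scale1r.
rewrite [X in _ + X + _]big1 ?addr0; last by move=> j /negbTE hj; rewrite mxE hj andbF scale0r.
rewrite big1 ?addr0 // => i /negbTE hi; apply: big1 => j _; by rewrite mxE hi scale0r.
Qed.

Lemma lcs_step n L k (D1 D2 : 'M[R]_n) :
  (lcs L k <= D1)%MS ->
  (forall (x v : 'rV[R]_n), (v <= D1)%MS -> (br L x v <= D2)%MS) ->
  (lcs L k.+1 <= D2)%MS.
Proof.
move=> h1 h2 /=; apply/sumsmx_subP => i _; apply/sumsmx_subP => j _.
rewrite genmxE; apply: h2; exact: submx_trans (row_sub j _) h1.
Qed.

Lemma diag_idem n (f : nat -> R) (v : 'rV[R]_n.+1) :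
  (forall k, f k * f k = f k) ->
  (v <= diag_mx (\row_(k < n.+1) f k))%MS -> v = v *m diag_mx (\row_(k < n.+1) f k).
Proof.
move=> hf /submxP [w ->]; rewrite -mulmxA mulmx_diag; congr (_ *m diag_mx _).
by apply/rowP => k; rewrite !mxE hf.
Qed.

Lemma cD n (x y : 'rV[R]_n.+1) i : c (x + y) i = c x i + c y i.
Proof. by rewrite /c mxE. Qed.
Lemma cN n (x : 'rV[R]_n.+1) i : c (- x) i = - c x i.
Proof. by rewrite /c mxE. Qed.
Lemma cB n (x y : 'rV[R]_n.+1) i : c (x - y) i = c x i - c y i.
Proof. by rewrite /c !mxE. Qed.

Lemma id_inord p i j : (i < p.+1)%N -> (j < p.+1)%N ->
  (1%:M : 'M[R]_p.+1) (inord i) (inord j) = (i == j)%:R.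
Proof. by move=> hi hj; rewrite mxE -(inj_eq val_inj) /= !inordK. Qed.

Definition Dg n (f : nat -> R) : 'M[R]_n.+1 := diag_mx (\row_(k < n.+1) f k).

Lemma c_Dg n (v : 'rV[R]_n.+1) (f : nat -> R) i : (i < n.+1)%N ->
  c (v *m Dg n f) i = c v i * f i.
Proof. exact: c_diag. Qed.

Lemma step0 n L (f2 : nat -> R) :
  (forall x v, br L x v *m Dg n f2 = br L x v) -> (lcs L 1 <= Dg n f2)%MS.
Proof.
move=> h; apply: (@lcs_step _ L 0 1%:M) => //= x v _; rewrite -h; exact: submxMl.
Qed.

Lemma stepS n L k (f1 f2 : nat -> R) : (forall k, f1 k * f1 k = f1 k) ->
  (lcs L k <= Dg n f1)%MS ->
  (forall x v, br L x (v *m Dg n f1) *m Dg n f2 = br L x (v *m Dg n f1)) ->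
  (lcs L k.+1 <= Dg n f2)%MS.
Proof.
move=> hf h1 h; apply: (lcs_step h1) => x v hv.
rewrite /Dg (diag_idem hf hv) -h; exact: submxMl.
Qed.

Lemma lcs_zero n L k : (lcs (n := n.+1) L k <= Dg n (fun _ => 0))%MS -> lcs (n := n.+1) L k = 0.
Proof.
have -> : Dg n (fun _ => 0) = 0 by apply/matrixP => i j; rewrite !mxE mul0rn.
by rewrite submx0 => /eqP.
Qed.

Lemma imB_delta n L p (alpha : vec n -> vec n -> 'rV[R]_p) k (a b : 'I_n) :
  ((delta_mx 0 b : 'rV[R]_n) <= lcs L k)%MS -> br L (delta_mx 0 a) (delta_mx 0 b) = 0 ->
  image_B L alpha k (alpha (delta_mx 0 a) (delta_mx 0 b)).
Proof.
move=> hl hb; exists (delta_mx a b); split.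
- rewrite -(mul_delta_mx (0 : 'I_1) a b); exact: submx_trans (submxMl _ _) hl.
- by rewrite tb_delta.
- by rewrite ta_delta.
Qed.

Lemma lcs1_low n L (a b : 'I_n) (v : 'rV[R]_n) :
  br L (delta_mx 0 a) (delta_mx 0 b) = v -> (v <= lcs L 1)%MS.
Proof.
move=> h /=; apply: (sumsmx_sup a) => //; apply: (sumsmx_sup b) => //.
by rewrite genmxE row1 h.
Qed.

Definition Hm : 'M[R]_2 := \matrix_(i < 2, j < 2) ((i + j == 1)%N)%:R.

Lemma H_inord i j : (i < 2)%N -> (j < 2)%N -> Hm (inord i) (inord j) = ((i + j == 1)%N)%:R.
Proof. by move=> hi hj; rewrite mxE !inordK. Qed.

Lemma H_sym : Hm^T = Hm.
Proof. by apply/matrixP => i j; rewrite !mxE addnC. Qed.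

Lemma H_unit : Hm \in unitmx.
Proof.
have h : Hm *m Hm = 1%:M.
  apply/matrixP => i j; rewrite !mxE !big_ord_recr big_ord0 /= !mxE.
  by case: i => [[|[|i]] hi] //; case: j => [[|[|j]] hj] //=; rewrite ?mulr0 ?mul0r ?mulr1 ?add0r ?addr0.
by case: (mulmx1_unit h).
Qed.


Ltac crunch := do 2 (rewrite ?(cD, cB, cN, c0, c_lin) ?c_Dg // ?c_alph // ?big_cons ?big_nil /=); rewrite ?c_delta //=.
Ltac crunch_in H := do 2 (rewrite ?(cD, cB, cN, c0, c_lin) ?c_Dg // ?c_alph // ?big_cons ?big_nil /= in H).
Ltac getc H v k := have H := congr1 (fun w => c w k) v;
  rewrite /= ?br_alph // in H; crunch_in H; rewrite ?c_delta // /= in H.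



Definition Ph1 : seq (nat * nat * nat * R) := [:: (0%N, 2%N, 0%N, 1); (1%N, 2%N, 1%N, 1)].

Lemma h1_d2 : forall X0 X1 X2 : vec h1_dim, d2 h1_br (@rho0 h1_dim 2) (@alph 2 2 Ph1) X0 X1 X2 = 0.
Proof.
move=> X0 X1 X2; rewrite /d2 /act /rho0 !mulmx0 !br_alph //.
apply: rowc => i hi; rewrite c0.
case: i hi => [|[|i]] // hi; crunch; ring.
Qed.

Lemma h1_wedge : forall X0 X1 X2 X3 : vec h1_dim,
  wedge22 1%:M (@alph 2 2 Ph1) (@alph 2 2 Ph1) X0 X1 X2 X3 = 0.
Proof.
move=> X0 X1 X2 X3; rewrite /wedge22 ?RplusE ?RminusE !form_c /= !big_cons !big_nil !id_inord //=; crunch; ring.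
Qed.

Lemma h1_centre : forall L0 : vec h1_dim, in_centre h1_br L0 ->
  (forall Lx, @alph 2 2 Ph1 Lx L0 = 0) -> L0 = 0.
Proof.
move=> L0 hc ha.
getc H1 (hc (delta_mx 0 (inord 1))) 2%N.
getc H2 (hc (delta_mx 0 (inord 0))) 2%N.
getc H3 (ha (delta_mx 0 (inord 0))) 0%N.
apply: rowc => i hi; rewrite c0.
case: i hi => [|[|[|i]]] // hi; lra.
Qed.

Lemma h1_lcs : lcs (n := h1_dim) h1_br 2 = 0.
Proof.
apply: lcs_zero.
apply: (@stepS _ _ _ (fun k => if k == 2%N then 1 else 0)).
- by move=> k; case: (k == 2%N); rewrite ?mulr1 ?mulr0.
- apply: step0 => x v; rewrite br_alph //; apply: rowc => i hi.
  case: i hi => [|[|[|i]]] // hi; crunch; ring.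
- move=> x v; rewrite br_alph //; apply: rowc => i hi.
  case: i hi => [|[|[|i]]] // hi; crunch; ring.
Qed.

Lemma h1_adm : admissible h1_dim h1_br.
Proof.
exists 2%N, 1%:M, (@rho0 h1_dim 2), (@alph 2 2 Ph1), (fun _ _ _ => 0); split.
- apply: orth0; [exact: trmx1 | exact: unitmx1].
- exact: ss0.
- split; [exact: alph_cochain2 | exact: cochain3_0 | exact: h1_d2 | ].
  by move=> X0 X1 X2 X3; rewrite /d3 ?RplusE ?RminusE ?RoppE h1_wedge mulr0; ring.
- by move=> X Y Z; rewrite /act /rho0 mulmx0.
- exists 1%N; split; first exact: h1_lcs.
  move=> k hk; split; [apply: condA_of; exact: h1_centre | exact: condB_id].
Qed.



Definition Pg41 : seq (nat * nat * nat * R) := [:: (0%N, 3%N, 0%N, 1)].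

Lemma g41_d2 : forall X0 X1 X2 : vec g41_dim, d2 g41_br (@rho0 g41_dim 1) (@alph 3 1 Pg41) X0 X1 X2 = 0.
Proof.
move=> X0 X1 X2; rewrite /d2 /act /rho0 !mulmx0 !br_alph //.
apply: rowc => i hi; rewrite c0.
case: i hi => [|i] // hi; crunch; ring.
Qed.

Lemma g41_wedge : forall X0 X1 X2 X3 : vec g41_dim,
  wedge22 1%:M (@alph 3 1 Pg41) (@alph 3 1 Pg41) X0 X1 X2 X3 = 0.
Proof.
move=> X0 X1 X2 X3; rewrite /wedge22 ?RplusE ?RminusE !form_c /= !big_cons !big_nil !id_inord //=; crunch; ring.
Qed.

Lemma g41_centre : forall L0 : vec g41_dim, in_centre g41_br L0 ->
  (forall Lx, @alph 3 1 Pg41 Lx L0 = 0) -> L0 = 0.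
Proof.
move=> L0 hc ha.
getc H1 (hc (delta_mx 0 (inord 0))) 3%N.
getc H2 (hc (delta_mx 0 (inord 0))) 2%N.
getc H3 (hc (delta_mx 0 (inord 1))) 2%N.
getc H4 (ha (delta_mx 0 (inord 0))) 0%N.
apply: rowc => i hi; rewrite c0.
case: i hi => [|[|[|[|i]]]] // hi; lra.
Qed.

Lemma g41_lcs : lcs (n := g41_dim) g41_br 3 = 0.
Proof.
apply: lcs_zero.
apply: (@stepS _ _ _ (fun k => if k == 3%N then 1 else 0)).
- by move=> k; case: (_ == _); rewrite ?mulr1 ?mulr0.
- apply: (@stepS _ _ _ (fun k => if (k == 2%N) || (k == 3%N) then 1 else 0)).
  + by move=> k; case: (_ || _); rewrite ?mulr1 ?mulr0.
  + apply: step0 => x v; rewrite br_alph //; apply: rowc => i hi.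
    case: i hi => [|[|[|[|i]]]] // hi; crunch; ring.
  + move=> x v; rewrite br_alph //; apply: rowc => i hi.
    case: i hi => [|[|[|[|i]]]] // hi; crunch; ring.
- move=> x v; rewrite br_alph //; apply: rowc => i hi.
  case: i hi => [|[|[|[|i]]]] // hi; crunch; ring.
Qed.

Lemma g41_adm : admissible g41_dim g41_br.
Proof.
exists 1%N, 1%:M, (@rho0 g41_dim 1), (@alph 3 1 Pg41), (fun _ _ _ => 0); split.
- apply: orth0; [exact: trmx1 | exact: unitmx1].
- exact: ss0.
- split; [exact: alph_cochain2 | exact: cochain3_0 | exact: g41_d2 | ].
  by move=> X0 X1 X2 X3; rewrite /d3 ?RplusE ?RminusE ?RoppE g41_wedge mulr0; ring.
- by move=> X Y Z; rewrite /act /rho0 mulmx0.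
- exists 2%N; split; first exact: g41_lcs.
  move=> k hk; split; [apply: condA_of; exact: g41_centre | exact: condB_id].
Qed.



Definition Pg52 : seq (nat * nat * nat * R) := [:: (0%N, 3%N, 0%N, 1); (0%N, 4%N, 1%N, 1)].

Lemma g52_d2 : forall X0 X1 X2 : vec g52_dim, d2 g52_br (@rho0 g52_dim 2) (@alph 4 2 Pg52) X0 X1 X2 = 0.
Proof.
move=> X0 X1 X2; rewrite /d2 /act /rho0 !mulmx0 !br_alph //.
apply: rowc => i hi; rewrite c0.
case: i hi => [|[|i]] // hi; crunch; ring.
Qed.

Lemma g52_wedge : forall X0 X1 X2 X3 : vec g52_dim,
  wedge22 1%:M (@alph 4 2 Pg52) (@alph 4 2 Pg52) X0 X1 X2 X3 = 0.
Proof.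
move=> X0 X1 X2 X3; rewrite /wedge22 ?RplusE ?RminusE !form_c /= !big_cons !big_nil !id_inord //=; crunch; ring.
Qed.

Lemma g52_centre : forall L0 : vec g52_dim, in_centre g52_br L0 ->
  (forall Lx, @alph 4 2 Pg52 Lx L0 = 0) -> L0 = 0.
Proof.
move=> L0 hc ha.
getc H1 (hc (delta_mx 0 (inord 0))) 3%N.
getc H2 (hc (delta_mx 0 (inord 0))) 4%N.
getc H3 (hc (delta_mx 0 (inord 1))) 3%N.
getc H4 (ha (delta_mx 0 (inord 0))) 0%N.
getc H5 (ha (delta_mx 0 (inord 0))) 1%N.
apply: rowc => i hi; rewrite c0.
case: i hi => [|[|[|[|[|i]]]]] // hi; lra.
Qed.

Lemma g52_lcs : lcs (n := g52_dim) g52_br 2 = 0.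
Proof.
apply: lcs_zero.
apply: (@stepS _ _ _ (fun k => if (k == 3%N) || (k == 4%N) then 1 else 0)).
- by move=> k; case: (_ || _); rewrite ?mulr1 ?mulr0.
- apply: step0 => x v; rewrite br_alph //; apply: rowc => i hi.
  case: i hi => [|[|[|[|[|i]]]]] // hi; crunch; ring.
- move=> x v; rewrite br_alph //; apply: rowc => i hi.
  case: i hi => [|[|[|[|[|i]]]]] // hi; crunch; ring.
Qed.

Lemma g52_adm : admissible g52_dim g52_br.
Proof.
exists 2%N, 1%:M, (@rho0 g52_dim 2), (@alph 4 2 Pg52), (fun _ _ _ => 0); split.
- apply: orth0; [exact: trmx1 | exact: unitmx1].
- exact: ss0.
- split; [exact: alph_cochain2 | exact: cochain3_0 | exact: g52_d2 | ].
  by move=> X0 X1 X2 X3; rewrite /d3 ?RplusE ?RminusE ?RoppE g52_wedge mulr0; ring.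
- by move=> X Y Z; rewrite /act /rho0 mulmx0.
- exists 1%N; split; first exact: g52_lcs.
  move=> k hk; split; [apply: condA_of; exact: g52_centre | exact: condB_id].
Qed.



Definition P64 : seq (nat * nat * nat * R) := [:: (4%N, 0%N, 0%N, 1); (5%N, 3%N, 0%N, -1); (5%N, 0%N, 1%N, 1)].

Lemma g64_d2 : forall X0 X1 X2 : vec g64_dim, d2 g64_br (@rho0 g64_dim 2) (@alph 5 2 P64) X0 X1 X2 = 0.
Proof.
move=> X0 X1 X2; rewrite /d2 /act /rho0 !mulmx0 !br_alph //.
apply: rowc => i hi; rewrite c0.
case: i hi => [|[|i]] // hi; crunch; ring.
Qed.

Lemma g64_wedge : forall X0 X1 X2 X3 : vec g64_dim,
  wedge22 Hm (@alph 5 2 P64) (@alph 5 2 P64) X0 X1 X2 X3 = 0.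
Proof.
move=> X0 X1 X2 X3; rewrite /wedge22 ?RplusE ?RminusE !form_c /= !big_cons !big_nil !H_inord //=; crunch; ring.
Qed.

Lemma g64_centre : forall L0 : vec g64_dim, in_centre g64_br L0 ->
  (forall Lx, @alph 5 2 P64 Lx L0 = 0) -> L0 = 0.
Proof.
move=> L0 hc ha.
getc H1 (hc (delta_mx 0 (inord 0))) 4%N.
getc H2 (hc (delta_mx 0 (inord 0))) 5%N.
getc H3 (hc (delta_mx 0 (inord 1))) 4%N.
getc H4 (hc (delta_mx 0 (inord 2))) 4%N.
getc H5 (ha (delta_mx 0 (inord 0))) 0%N.
getc H6 (ha (delta_mx 0 (inord 0))) 1%N.
apply: rowc => i hi; rewrite c0.
case: i hi => [|[|[|[|[|[|i]]]]]] // hi; lra.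
Qed.

Lemma g64_lcs : lcs (n := g64_dim) g64_br 2 = 0.
Proof.
apply: lcs_zero.
apply: (@stepS _ _ _ (fun k => if (k == 4%N) || (k == 5%N) then 1 else 0)).
- by move=> k; case: (_ || _); rewrite ?mulr1 ?mulr0.
- apply: step0 => x v; rewrite br_alph //; apply: rowc => i hi.
  case: i hi => [|[|[|[|[|[|i]]]]]] // hi; crunch; ring.
- move=> x v; rewrite br_alph //; apply: rowc => i hi.
  case: i hi => [|[|[|[|[|[|i]]]]]] // hi; crunch; ring.
Qed.

Lemma g64_condB k : (k <= 1)%N -> cond_B g64_br Hm (@alph 5 2 P64) k.
Proof.
move=> hk A hA h.
have hl4 : ((delta_mx 0 (inord 4) : 'rV_6) <= lcs g64_br k)%MS.
  case: k hk {hA h} => [|[|k]] // _; first exact: submx1.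
  apply: (@lcs1_low _ _ (inord 0) (inord 1)); rewrite br_alph //.
  apply: rowc => i hi; case: i hi => [|[|[|[|[|[|i]]]]]] // hi; crunch; ring.
have hl5 : ((delta_mx 0 (inord 5) : 'rV_6) <= lcs g64_br k)%MS.
  case: k hk {hA h hl4} => [|[|k]] // _; first exact: submx1.
  apply: (@lcs1_low _ _ (inord 0) (inord 2)); rewrite br_alph //.
  apply: rowc => i hi; case: i hi => [|[|[|[|[|[|i]]]]]] // hi; crunch; ring.
have z4 : br g64_br (delta_mx 0 (inord 0)) (delta_mx 0 (inord 4)) = 0 :> 'rV_6.
  rewrite br_alph //; apply: rowc => i hi; rewrite c0.
  case: i hi => [|[|[|[|[|[|i]]]]]] // hi; crunch; ring.
have z5 : br g64_br (delta_mx 0 (inord 0)) (delta_mx 0 (inord 5)) = 0 :> 'rV_6.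
  rewrite br_alph //; apply: rowc => i hi; rewrite c0.
  case: i hi => [|[|[|[|[|[|i]]]]]] // hi; crunch; ring.
have E1 := h _ (imB_delta (@alph 5 2 P64) hl4 z4).
have E2 := h _ (imB_delta (@alph 5 2 P64) hl5 z5).
rewrite form_c /= !big_cons !big_nil !H_inord //= in E1.
rewrite form_c /= !big_cons !big_nil !H_inord //= in E2.
crunch_in E1; crunch_in E2; rewrite ?c_delta //= in E1 E2.
apply: rowc => i hi; rewrite c0.
case: i hi => [|[|i]] // hi; lra.
Qed.

Lemma g64_adm : admissible g64_dim g64_br.
Proof.
exists 2%N, Hm, (@rho0 g64_dim 2), (@alph 5 2 P64), (fun _ _ _ => 0); split.
- apply: orth0; [exact: H_sym | exact: H_unit].
- exact: ss0.
- split; [exact: alph_cochain2 | exact: cochain3_0 | exact: g64_d2 | ].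
  by move=> X0 X1 X2 X3; rewrite /d3 ?RplusE ?RminusE ?RoppE g64_wedge mulr0; ring.
- by move=> X Y Z; rewrite /act /rho0 mulmx0.
- exists 1%N; split; first exact: g64_lcs.
  move=> k hk; split; [apply: condA_of; exact: g64_centre | exact: g64_condB].
Qed.



Definition P65 : seq (nat * nat * nat * R) := [:: (4%N, 0%N, 0%N, 1); (5%N, 3%N, 0%N, 1); (4%N, 3%N, 1%N, 1); (5%N, 0%N, 1%N, -1)].

Lemma g65_d2 : forall X0 X1 X2 : vec g65_dim, d2 g65_br (@rho0 g65_dim 2) (@alph 5 2 P65) X0 X1 X2 = 0.
Proof.
move=> X0 X1 X2; rewrite /d2 /act /rho0 !mulmx0 !br_alph //.
apply: rowc => i hi; rewrite c0.
case: i hi => [|[|i]] // hi; crunch; ring.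
Qed.

Lemma g65_wedge : forall X0 X1 X2 X3 : vec g65_dim,
  wedge22 Hm (@alph 5 2 P65) (@alph 5 2 P65) X0 X1 X2 X3 = 0.
Proof.
move=> X0 X1 X2 X3; rewrite /wedge22 ?RplusE ?RminusE !form_c /= !big_cons !big_nil !H_inord //=; crunch; ring.
Qed.

Lemma g65_centre : forall L0 : vec g65_dim, in_centre g65_br L0 ->
  (forall Lx, @alph 5 2 P65 Lx L0 = 0) -> L0 = 0.
Proof.
move=> L0 hc ha.
getc H1 (hc (delta_mx 0 (inord 0))) 4%N.
getc H2 (hc (delta_mx 0 (inord 0))) 5%N.
getc H3 (hc (delta_mx 0 (inord 1))) 4%N.
getc H4 (hc (delta_mx 0 (inord 1))) 5%N.
getc H5 (ha (delta_mx 0 (inord 0))) 0%N.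
getc H6 (ha (delta_mx 0 (inord 0))) 1%N.
apply: rowc => i hi; rewrite c0.
case: i hi => [|[|[|[|[|[|i]]]]]] // hi; lra.
Qed.

Lemma g65_lcs : lcs (n := g65_dim) g65_br 2 = 0.
Proof.
apply: lcs_zero.
apply: (@stepS _ _ _ (fun k => if (k == 4%N) || (k == 5%N) then 1 else 0)).
- by move=> k; case: (_ || _); rewrite ?mulr1 ?mulr0.
- apply: step0 => x v; rewrite br_alph //; apply: rowc => i hi.
  case: i hi => [|[|[|[|[|[|i]]]]]] // hi; crunch; ring.
- move=> x v; rewrite br_alph //; apply: rowc => i hi.
  case: i hi => [|[|[|[|[|[|i]]]]]] // hi; crunch; ring.
Qed.

Lemma g65_condB k : (k <= 1)%N -> cond_B g65_br Hm (@alph 5 2 P65) k.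
Proof.
move=> hk A hA h.
have hl4 : ((delta_mx 0 (inord 4) : 'rV_6) <= lcs g65_br k)%MS.
  case: k hk {hA h} => [|[|k]] // _; first exact: submx1.
  apply: (@lcs1_low _ _ (inord 0) (inord 1)); rewrite br_alph //.
  apply: rowc => i hi; case: i hi => [|[|[|[|[|[|i]]]]]] // hi; crunch; ring.
have hl5 : ((delta_mx 0 (inord 5) : 'rV_6) <= lcs g65_br k)%MS.
  case: k hk {hA h hl4} => [|[|k]] // _; first exact: submx1.
  apply: (@lcs1_low _ _ (inord 0) (inord 2)); rewrite br_alph //.
  apply: rowc => i hi; case: i hi => [|[|[|[|[|[|i]]]]]] // hi; crunch; ring.
have z4 : br g65_br (delta_mx 0 (inord 0)) (delta_mx 0 (inord 4)) = 0 :> 'rV_6.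
  rewrite br_alph //; apply: rowc => i hi; rewrite c0.
  case: i hi => [|[|[|[|[|[|i]]]]]] // hi; crunch; ring.
have z5 : br g65_br (delta_mx 0 (inord 0)) (delta_mx 0 (inord 5)) = 0 :> 'rV_6.
  rewrite br_alph //; apply: rowc => i hi; rewrite c0.
  case: i hi => [|[|[|[|[|[|i]]]]]] // hi; crunch; ring.
have E1 := h _ (imB_delta (@alph 5 2 P65) hl4 z4).
have E2 := h _ (imB_delta (@alph 5 2 P65) hl5 z5).
rewrite form_c /= !big_cons !big_nil !H_inord //= in E1.
rewrite form_c /= !big_cons !big_nil !H_inord //= in E2.
crunch_in E1; crunch_in E2; rewrite ?c_delta //= in E1 E2.
apply: rowc => i hi; rewrite c0.
case: i hi => [|[|i]] // hi; lra.
Qed.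

Lemma g65_adm : admissible g65_dim g65_br.
Proof.
exists 2%N, Hm, (@rho0 g65_dim 2), (@alph 5 2 P65), (fun _ _ _ => 0); split.
- apply: orth0; [exact: H_sym | exact: H_unit].
- exact: ss0.
- split; [exact: alph_cochain2 | exact: cochain3_0 | exact: g65_d2 | ].
  by move=> X0 X1 X2 X3; rewrite /d3 ?RplusE ?RminusE ?RoppE g65_wedge mulr0; ring.
- by move=> X Y Z; rewrite /act /rho0 mulmx0.
- exists 1%N; split; first exact: g65_lcs.
  move=> k hk; split; [apply: condA_of; exact: g65_centre | exact: g65_condB].
Qed.

Theorem proposition1 :
  admissible h1_dim h1_br /\ admissible g41_dim g41_br /\
  admissible g52_dim g52_br /\ admissible g64_dim g64_br /\
  admissible g65_dim g65_br.
Proof.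
split; first exact: h1_adm.
split; first exact: g41_adm.
split; first exact: g52_adm.
split; first exact: g64_adm.
exact: g65_adm.
Qed.
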